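(* Let $\Gamma$ be a finite graph and let $z\in H^1(\Gamma,\mathbb{Z})$ be nonzero. Then $z$ is a coedge, i.e. $z=\pm e^*$ for some edge $e$ of $\Gamma$, if and only if $z(c)\in\{+1,0,-1\}$ for every $(0,1)$-cycle $c$ of $\Gamma$.
   Context: Edges of $\Gamma$ are oriented; $H_1(\Gamma,\mathbb{Z})\subset\bigoplus\mathbb{Z}e_i$ is the cycle group and $H^1(\Gamma,\mathbb{Z})$ its dual (cokernel of the coboundary $C^0\to\bigoplus\mathbb{Z}e_i^*$); the image of $e_i^*$ in $H^1$ is the coedge $e_i^*$ (up to sign, depending on the chosen orientation). A $(0,1)$-cycle is a cycle in which every edge appears with coefficient in $\{+1,0,-1\}$, i.e. a sum of simple cycles with pairwise disjoint edge supports. *)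

(* Defs.v *)
From HB Require Import structures.
From mathcomp Require Import all_boot all_order all_algebra.
Set Implicit Arguments. Unset Strict Implicit. Unset Printing Implicit Defensive.
Import Order.TTheory GRing.Theory Num.Theory.
Local Open Scope ring_scope.

(* A finite (multi)graph with oriented edges: finite vertex type V, finite
   edge type E, each edge e goes from [src e] to [tgt e] (loops and parallel
   edges allowed). *)
Record graph := Graph {
  vert : finType;
  edge : finType;
  src : edge -> vert;
  tgt : edge -> vert }.

(* 1-chains / 1-cochains: integer-valued functions on edges. *)
Definition chain (G : graph) := edge G -> int.

Definition boundary (G : graph) (c : chain G) (v : vert G) : int :=
  \sum_(e | tgt e == v) c e - \sum_(e | src e == v) c e.

(* c is a cycle, i.e. an element of H_1(G, Z) *)
Definition is_cycle (G : graph) (c : chain G) : Prop :=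
  forall v, boundary c v = 0.

Definition zero_one_cycle (G : graph) (c : chain G) : Prop :=
  is_cycle c /\ forall e, c e \in [:: 1; 0; -1].

Definition coboundary (G : graph) (g : vert G -> int) : chain G :=
  fun e => g (tgt e) - g (src e).

(* H^1(G,Z) = Z^E / image of coboundary. A class z is represented by a
   cochain f; two cochains represent the same class iff they differ by a
   coboundary. *)
Definition cohomologous (G : graph) (f f' : chain G) : Prop :=
  exists g : vert G -> int, forall e, f e - f' e = coboundary g e.

Definition class_zero (G : graph) (f : chain G) : Prop :=
  cohomologous f (fun _ => 0).

Definition coedge_cochain (G : graph) (e0 : edge G) : chain G :=
  fun e => if e == e0 then 1 else 0.

Definition is_coedge (G : graph) (f : chain G) : Prop :=
  exists (e0 : edge G) (s : int), s \in [:: 1; -1] /\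
    cohomologous f (fun e => s * coedge_cochain e0 e).

(* evaluation z(c) of the class of f on a chain c (well defined on cycles) *)
Definition pairing (G : graph) (f c : chain G) : int :=
  \sum_e f e * c e.

(* Main.v *)
Require Import Defs.
From mathcomp Require Import all_boot all_order all_algebra.
From mathcomp Require Import zify ring.
Set Implicit Arguments. Unset Strict Implicit. Unset Printing Implicit Defensive.
Import Order.TTheory GRing.Theory Num.Theory.
Local Open Scope ring_scope.

Section Aux.
Variable G : graph.
Implicit Types (c h f P : chain G) (g : vert G -> int).

Lemma boundaryE c v : boundary c v =
  \sum_e (((tgt e == v)%:R : int) - (src e == v)%:R) * c e.
Proof.
rewrite /boundary (big_mkcond (fun e => tgt e == v)) (big_mkcond (fun e => src e == v)) /=.
rewrite -sumrB; apply: eq_bigr => e _.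
by case: (tgt e == v); case: (src e == v); rewrite /= ?mul1r ?mul0r ?subr0 ?sub0r ?subrr ?mulN1r.
Qed.

Lemma sum_pick (T : finType) (F : T -> int) w : \sum_v F v * (w == v)%:R = F w.
Proof.
rewrite (bigD1 w) //= eqxx mulr1 big1 ?addr0 // => v /negbTE.
by rewrite eq_sym => ->; rewrite mulr0.
Qed.

Lemma pairing_cob g c : is_cycle c -> pairing (coboundary g) c = 0.
Proof.
move=> Hc.
have -> : pairing (coboundary g) c = \sum_v g v * boundary c v.
  under [RHS]eq_bigr => v _ do rewrite boundaryE big_distrr.
  rewrite exchange_big /=; apply: eq_bigr => e _.
  rewrite /coboundary.
  under eq_bigr => v _ do rewrite mulrA mulrBr mulrBl.
  rewrite sumrB -!big_distrl /= sum_pick sum_pick; by rewrite mulrBl.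
by rewrite big1 // => v _; rewrite Hc mulr0.
Qed.


Lemma boundary_add P d e v :
  boundary (fun e' => P e' + d * (e' == e)%:R) v =
  boundary P v + d * ((tgt e == v)%:R - (src e == v)%:R).
Proof.
rewrite !boundaryE.
under eq_bigr => e' _ do rewrite mulrDr.
rewrite big_split /=; congr (_ + _).
rewrite (eq_bigr (fun e' => d * ((((tgt e' == v)%:R : int) - (src e' == v)%:R)) * (e == e')%:R)).
  by rewrite (sum_pick (fun e' => d * ((((tgt e' == v)%:R : int) - (src e' == v)%:R)))).
by move=> e' _; rewrite mulrCA mulrA (eq_sym e').
Qed.

Definition fwd_ok h c e := (c e < 1) && (0 <= h e).
Definition bwd_ok h c e := (-1 < c e) && (h e <= 0).
Definition arel h c e0 : rel (vert G) := fun a b =>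
  [exists e, (e != e0) && (((src e == a) && (tgt e == b) && fwd_ok h c e)
     || ((tgt e == a) && (src e == b) && bwd_ok h c e))].
Definition valid h c e0 P := P e0 = 0 /\ forall e,
  P e = 0 \/ (P e = 1 /\ fwd_ok h c e) \/ (P e = -1 /\ bwd_ok h c e).

Lemma path_chain h c e0 p : forall x, path (arel h c e0) x p -> uniq (x :: p) ->
  exists P, valid h c e0 P /\
   (forall v, boundary P v = (last x p == v)%:R - (x == v)%:R) /\
   (forall e, P e != 0 -> (src e \in x :: p) && (tgt e \in x :: p)).
Proof.
elim: p => [|y p IH] x /=.
  move=> _ _; exists (fun _ => 0); split; first by split => // e; left.
  split; last by move=> e; rewrite eqxx.
  move=> v; rewrite subrr boundaryE big1 // => e _; by rewrite mulr0.
case/andP=> /existsP [e /andP [ne He]] Hp /andP [Hx Hu].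
have [P [[P0 VP] [BP SP]]] := IH y Hp Hu.
have Pe : P e = 0.
  apply/eqP; apply: contraT => /SP /andP [Hs Ht].
  case/orP: He => /andP [/andP [/eqP Es /eqP Et] _].
    by move: Hs; rewrite Es (negbTE Hx).
  by move: Ht; rewrite Es (negbTE Hx).
case/orP: He => /andP [/andP [/eqP Es /eqP Et] Hok].
- exists (fun e' => P e' + 1 * (e' == e)%:R); split; [split|split].
  + by rewrite P0 eq_sym (negbTE ne) addr0.
  + move=> e'; have [->|ne'] := eqVneq e' e.
      by rewrite Pe ?eqxx add0r ?mulr1; right; left.
    by rewrite ?(negbTE ne') addr0; apply: VP.
  + by move=> v; rewrite boundary_add BP Es Et; ring.
  + move=> e'; have [->|ne'] := eqVneq e' e.
      by rewrite Es Et !inE ?eqxx /= ?orbT.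
    rewrite ?(negbTE ne') addr0 => /SP /andP [H1 H2].
    by rewrite inE H1 inE H2 !orbT.
- exists (fun e' => P e' + (-1) * (e' == e)%:R); split; [split|split].
  + by rewrite P0 eq_sym (negbTE ne) mulr0 addr0.
  + move=> e'; have [->|ne'] := eqVneq e' e.
      by rewrite Pe ?eqxx add0r ?mulr1; right; right.
    by rewrite ?(negbTE ne') mulr0 addr0; apply: VP.
  + by move=> v; rewrite boundary_add BP Es Et; ring.
  + move=> e'; have [->|ne'] := eqVneq e' e.
      by rewrite Es Et !inE ?eqxx /= ?orbT.
    rewrite ?(negbTE ne') mulr0 addr0 => /SP /andP [H1 H2].
    by rewrite inE H1 inE H2 !orbT.
Qed.


Lemma boundaryD (a b : chain G) v : boundary (fun e => a e + b e) v = boundary a v + boundary b v.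
Proof. rewrite !boundaryE -big_split /=; apply: eq_bigr => e _; by rewrite mulrDr. Qed.

Definition norm1 h := \sum_e `|h e|.

Lemma key h c e0 : zero_one_cycle c -> 0 < h e0 -> c e0 <= 0 ->
  (exists c', zero_one_cycle c' /\ pairing h c < pairing h c') \/
  (exists g, norm1 (fun e => h e - coboundary g e) < norm1 h).
Proof.
move=> [Cc Cv] Hh Hc.
case: (boolP (connect (arel h c e0) (tgt e0) (src e0))) => [/connectP [p Hp Hl] | Hn].
  move: Hl; case: (shortenP Hp) => p' Hp' Hu _ Hl.
  have [P [[P0 VP] [BP _]]] := path_chain Hp' Hu.
  left; exists (fun e => (c e + P e) + 1 * (e == e0)%:R); split.
    split.
      move=> v; rewrite boundary_add boundaryD Cc BP -Hl; ring.
    move=> e; have := Cv e; rewrite !inE.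
    have [->|ne] := eqVneq e e0.
      rewrite P0 /= mulr1 addr0; lia.
    rewrite /= mulr0 addr0.
    case: (VP e) => [->|[[-> /andP [H1 H2]]|[-> /andP [H1 H2]]]]; lia.
  rewrite /pairing.
  under [X in _ < X]eq_bigr => e _ do rewrite !mulrDr.
  rewrite !big_split /=.
  have E3 : \sum_e h e * (1 * (e == e0)%:R) = h e0.
    rewrite (eq_bigr (fun e => h e * (e0 == e)%:R)) ?sum_pick // => e _.
    by rewrite mul1r eq_sym.
  have E2 : 0 <= \sum_e h e * P e.
    apply: sumr_ge0 => e _.
    case: (VP e) => [->|[[-> /andP [H1 H2]]|[-> /andP [H1 H2]]]]; lia.
  rewrite E3 -addrA ltrDl; exact: ltr_wpDl E2 Hh.
right.
set R := connect (arel h c e0) (tgt e0).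
exists (fun v => (R v)%:R).
have Hf : forall e, e != e0 -> R (src e) -> fwd_ok h c e -> R (tgt e).
  move=> e ne Hs Hok; apply: (connect_trans Hs); apply: connect1.
  by apply/existsP; exists e; rewrite ne !eqxx Hok.
have Hb : forall e, e != e0 -> R (tgt e) -> bwd_ok h c e -> R (src e).
  move=> e ne Hs Hok; apply: (connect_trans Hs); apply: connect1.
  by apply/existsP; exists e; rewrite ne !eqxx Hok orbT.
have Rt : R (tgt e0) by apply: connect0.
have Rs : R (src e0) = false by apply/negbTE.
have EB : forall e, `|h e - coboundary (fun v => (R v)%:R) e| - `|h e| <=
     - (coboundary (fun v => (R v)%:R) e * c e) - (e == e0)%:R.
  move=> e; rewrite /coboundary; have := Cv e; rewrite !inE.
  have [->|ne] := eqVneq e e0.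
    rewrite Rt Rs /=; lia.
  have := Hf e ne; have := Hb e ne; rewrite /fwd_ok /bwd_ok.
  case: (R (src e)); case: (R (tgt e)) => /=; lia.
have S1 : norm1 (fun e => h e - coboundary (fun v => (R v)%:R) e) - norm1 h <=
    \sum_e (- (coboundary (fun v => (R v)%:R) e * c e) - (e == e0)%:R).
  rewrite /norm1 -sumrB; exact: ler_sum.
move: S1; rewrite sumrB sumrN.
have -> : \sum_e coboundary (fun v => (R v)%:R) e * c e = 0 by exact: pairing_cob.
have -> : \sum_e ((e == e0)%:R : int) = 1.
  rewrite (eq_bigr (fun e => 1 * ((e0 == e)%:R : int))) ?sum_pick // => e _.
  by rewrite mul1r eq_sym.
lia.
Qed.

Lemma pair_le h c : zero_one_cycle c -> pairing h c <= norm1 h.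
Proof.
move=> [_ Cv]; apply: ler_sum => e _; have := Cv e; rewrite !inE.
by case/or3P => /eqP ->; rewrite ?mulr1 ?mulr0 ?mulrN1; lia.
Qed.

Lemma zoc_neg c : zero_one_cycle c -> zero_one_cycle (fun e => - c e).
Proof.
move=> [Cc Cv]; split.
  move=> v; have := Cc v; rewrite !boundaryE => E.
  under eq_bigr => e _ do rewrite mulrN.
  by rewrite sumrN E oppr0.
move=> e; have := Cv e; rewrite !inE; lia.
Qed.

Lemma pairing_split f g c : is_cycle c ->
  pairing f c = pairing (fun e => f e - coboundary g e) c.
Proof.
move=> Cc.
have : pairing (fun e => f e - coboundary g e) c + pairing (coboundary g) c = pairing f c.
  rewrite /pairing -big_split; apply: eq_bigr => e _ /=; ring.
by rewrite pairing_cob // addr0 => ->.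
Qed.

End Aux.

Theorem lemma5p3 (G : graph) (f : chain G) :
  ~ class_zero f ->
  (is_coedge f <->
   (forall c : chain G, zero_one_cycle c -> pairing f c \in [:: 1; 0; -1])).
Proof.
move=> Hnz; split.
  case=> e0 [s [Hs [g Hg]]] c [Cc Cv].
  have E : pairing f c = s * c e0.
    have -> : pairing f c = pairing (fun e => s * coedge_cochain e0 e) c
        + pairing (coboundary g) c.
      rewrite /pairing -big_split; apply: eq_bigr => e _ /=.
      rewrite -mulrDl -Hg; congr (_ * _); ring.
    rewrite pairing_cob // addr0 /pairing (bigD1 e0) //= big1 ?addr0.
      by rewrite /coedge_cochain eqxx mulr1.
    by move=> e ne; rewrite /coedge_cochain (negbTE ne) mulr0 mul0r.
  rewrite E; have := Cv e0; move: Hs; rewrite !inE.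
  by case/orP => /eqP ->; rewrite ?mul1r ?mulN1r; lia.
move=> H.
pose hg g := fun e => f e - coboundary g e.
have nn : forall g, 0 <= norm1 (hg g).
  by move=> g; apply: sumr_ge0 => e _; apply: normr_ge0.
have A : forall g, (forall g', norm1 (hg g') < norm1 (hg g) -> is_coedge f) -> is_coedge f.
  move=> g Hmin; set h := hg g.
  have main2 : forall k c, zero_one_cycle c ->
      (absz (norm1 h - pairing h c) < k)%N -> is_coedge f.
    elim=> [//|k IH] c Hc Hk.
    case: (boolP [exists e, ((0 < h e) && (c e != 1)) || ((h e < 0) && (c e != -1))]).
      case/existsP => e /orP [/andP [H1 H2] | /andP [H1 H2]].
        have Hc0 : c e <= 0 by have := Hc.2 e; move: H2; rewrite !inE; lia.
        case: (key Hc H1 Hc0) => [[c' [Hc' Hlt]] | [g' Hg']].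
          apply: (IH c' Hc'); have := pair_le h Hc'; have := pair_le h Hc; lia.
        apply: (Hmin (fun v => g v + g' v)).
        suff -> : norm1 (hg (fun v => g v + g' v)) = norm1 (fun e => h e - coboundary g' e) by [].
        apply: eq_bigr => e' _; congr (`|_|); rewrite /h /hg /coboundary; ring.
      have Hc0 : - c e <= 0 by have := Hc.2 e; move: H2; rewrite !inE; lia.
      have H1' : 0 < - h e by lia.
      case: (@key _ (fun e => - h e) (fun e => - c e) e (zoc_neg Hc) H1' Hc0)
        => [[c' [Hc' Hlt]] | [g' Hg']].
        apply: (IH (fun e => - c' e) (zoc_neg Hc')).
        have E1 : pairing (fun e => - h e) (fun e => - c e) = pairing h c.
          by apply: eq_bigr => e' _; rewrite mulrNN.
        have E2 : pairing (fun e => - h e) c' = pairing h (fun e => - c' e).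
          by apply: eq_bigr => e' _; rewrite mulrN mulNr.
        have := pair_le h (zoc_neg Hc'); have := pair_le h Hc; lia.
      apply: (Hmin (fun v => g v - g' v)).
      have E1 : norm1 (fun e => - h e) = norm1 h.
        by apply: eq_bigr => e' _; rewrite normrN.
      suff -> : norm1 (hg (fun v => g v - g' v)) =
          norm1 (fun e => - h e - coboundary g' e) by rewrite -E1.
      apply: eq_bigr => e' _; rewrite -normrN; congr (`|_|).
      rewrite /h /hg /coboundary; ring.
    rewrite negb_exists => /forallP Hall.
    have E : pairing h c = norm1 h.
      apply: eq_bigr => e _; have := Hall e; have := Hc.2 e; rewrite !inE.
      by case/or3P => /eqP ->; rewrite ?mulr1 ?mulr0 ?mulrN1; lia.
    have := H c Hc; rewrite (@pairing_split _ f g c Hc.1) -/h E => Hin.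
    have [n0|n1] : norm1 h = 0 \/ norm1 h = 1 by have := nn g; rewrite -/h; move: Hin; rewrite !inE; lia.
      exfalso; apply: Hnz; exists g => e.
      have := psumr_eq0P (fun e _ => normr_ge0 (h e)) n0 (i := e) isT.
      rewrite /h /hg /coboundary; lia.
    have [e0 ne0] : exists e0, h e0 != 0.
      apply/existsP; apply: contraT; rewrite negb_exists => /forallP Z.
      move: n1; rewrite /norm1 big1 // => e _; have := Z e; rewrite negbK => /eqP ->.
      by rewrite normr0.
    move: n1; rewrite /norm1 (bigD1 e0) //= => n1.
    set S := \sum_(i | _) _ in n1.
    have Hr : 0 <= S by apply: sumr_ge0 => e _; apply: normr_ge0.
    have Hr0 : S = 0 by lia.
    have Zo := psumr_eq0P (fun e _ => normr_ge0 (h e)) Hr0.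
    exists e0, (h e0); split; first by rewrite !inE; lia.
    exists g => e; rewrite /coedge_cochain.
    have [->|ne] := eqVneq e e0.
      rewrite mulr1 /coboundary; move: (erefl (h e0)); rewrite {2}/h /hg /coboundary; lia.
    have := Zo e ne; rewrite mulr0 subr0 /h /hg /coboundary; lia.
  by apply: (main2 _ (fun _ => 0)) => //; split; [move=> v; rewrite boundaryE big1 // => e _; rewrite mulr0 | move=> e; rewrite !inE eqxx orbT].
have main : forall n g, (absz (norm1 (hg g)) < n)%N -> is_coedge f.
  elim=> [//|n IH] g Hn; apply: (A g) => g' Hlt; apply: (IH g').
  have := nn g; have := nn g'; lia.
exact: (main _ (fun _ => 0) (ltnSn _)).
Qed.
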